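(* Let $K,N$ be symmetric homogeneous stable means and $M$ a symmetric homogeneous mean, all having symmetric asymptotic expansions with coefficients $(a^K_n),(a^N_n),(a^M_n)$. If $M$ is simultaneously $(K,N)$-stabilized and $(N,K)$-stabilized, then either $a^K_1=a^N_1$, or $a^K_1+a^N_1=-1$. In the first case $a^M_1=a^K_1=a^N_1$ and $a^M_2=\frac16a^M_1(1+a^M_1)(1-4a^M_1)$; in the second case $a^M_1=-\frac12$ and $a^M_2=-\frac18$.
   Context: A bi-variate mean is $M:(0,\infty)^2\to(0,\infty)$ with $\min\le M\le\max$; symmetric and homogeneous (degree 1). $M$ is stable if $M(s,t)=M\big(M(s,M(s,t)),M(M(s,t),t)\big)$. For stable means $K,N$, $M$ is $(K,N)$-stabilized if $M(s,t)=K\big(N(s,M(s,t)),N(M(s,t),t)\big)$ for all $s,t>0$. A mean has a symmetric asymptotic expansion with coefficients $(a_n)$ if for every fixed real $t$ and $N\ge0$, $M(x-t,x+t)=\sum_{n=0}^Na_nt^{2n}x^{-2n+1}+o(x^{-2N+1})$ as $x\to\infty$. *)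

(* Defs.v *)
From Stdlib Require Import Reals Lra.
Open Scope R_scope.

(* A bi-variate mean: M maps (0,oo)^2 into (0,oo) with min <= M <= max.
   M is a total function R -> R -> R; only its values on positive
   arguments matter. *)
Definition is_mean (M : R -> R -> R) : Prop :=
  forall s t, 0 < s -> 0 < t ->
    0 < M s t /\ Rmin s t <= M s t /\ M s t <= Rmax s t.

Definition symmetric_mean (M : R -> R -> R) : Prop :=
  forall s t, 0 < s -> 0 < t -> M s t = M t s.

Definition homogeneous_mean (M : R -> R -> R) : Prop :=
  forall l s t, 0 < l -> 0 < s -> 0 < t -> M (l * s) (l * t) = l * M s t.

Definition stable_mean (M : R -> R -> R) : Prop :=
  forall s t, 0 < s -> 0 < t ->
    M s t = M (M s (M s t)) (M (M s t) t).

Definition stabilized (K N M : R -> R -> R) : Prop :=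
  forall s t, 0 < s -> 0 < t ->
    M s t = K (N s (M s t)) (N (M s t) t).

Definition sym_partial_sum (a : nat -> R) (t x : R) (Nn : nat) : R :=
  sum_f_R0 (fun n => a n * t ^ (2 * n) * powerRZ x (1 - 2 * Z.of_nat n)) Nn.

Definition has_sym_asymp_expansion (M : R -> R -> R) (a : nat -> R) : Prop :=
  forall (t : R) (Nn : nat) (eps : R), 0 < eps ->
    exists X : R, forall x : R, X < x ->
      Rabs (M (x - t) (x + t) - sym_partial_sum a t x Nn)
        <= eps * powerRZ x (1 - 2 * Z.of_nat Nn).

(* Main.v *)
Require Import Defs.
From Stdlib Require Import Reals Lra Lia.
Open Scope R_scope.

Record T4 := mk { k0 : R; k1 : R; k2 : R; k3 : R; k4 : R }.

Definition ev (x:T4) (u:R) : R := k0 x + k1 x * u + k2 x * u^2 + k3 x * u^3 + k4 x * u^4.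
Definition lo4 (g:R->R) : Prop := forall eps, 0 < eps -> exists d, 0 < d /\ forall u, Rabs u < d -> Rabs (g u) <= eps * u^4.
Definition lb (h:R->R) : Prop := exists B d, 0 < d /\ forall u, Rabs u < d -> Rabs (h u) <= B.
Definition asym (X:R->R) (x:T4) : Prop := lo4 (fun u => X u - ev x u).

Lemma u4_nonneg u : 0 <= u^4.
Proof. replace (u^4) with ((u^2)^2) by ring. apply pow2_ge_0. Qed.

Lemma pow4_abs u : u^4 = Rabs u ^ 4.
Proof. rewrite RPow_abs. rewrite Rabs_pos_eq; auto using u4_nonneg. Qed.

Lemma pow_abs_le1 u n : Rabs u <= 1 -> Rabs (u^n) <= 1.
Proof.
  intro H. rewrite <- RPow_abs. pose proof (Rabs_pos u).
  induction n; simpl; [lra|]. nra.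
Qed.

Lemma lo4_ext g h : (forall u, g u = h u) -> lo4 g -> lo4 h.
Proof. intros E H eps He. destruct (H eps He) as [d [Hd Hu]]. exists d; split; auto. intros u Hu'. rewrite <- E. auto. Qed.

Lemma lo4_ext_loc g h : (exists d, 0 < d /\ forall u, Rabs u < d -> g u = h u) -> lo4 g -> lo4 h.
Proof.
  intros [d0 [Hd0 E]] H eps He. destruct (H eps He) as [d [Hd Hu]].
  exists (Rmin d d0); split; [apply Rmin_pos; auto|].
  intros u Hu'. rewrite <- E. apply Hu. eapply Rlt_le_trans; [apply Hu'|apply Rmin_l].
  eapply Rlt_le_trans; [apply Hu'|apply Rmin_r].
Qed.

Lemma lo4_add g h : lo4 g -> lo4 h -> lo4 (fun u => g u + h u).
Proof.
 intros Hg Hh eps He.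
 destruct (Hg (eps/2)) as [d1 [Hd1 H1]]; [lra|].
 destruct (Hh (eps/2)) as [d2 [Hd2 H2]]; [lra|].
 exists (Rmin d1 d2); split; [apply Rmin_pos; auto|].
 intros u Hu.
 assert (A1 := H1 u (Rlt_le_trans _ _ _ Hu (Rmin_l _ _))).
 assert (A2 := H2 u (Rlt_le_trans _ _ _ Hu (Rmin_r _ _))).
 eapply Rle_trans; [apply Rabs_triang|]. lra.
Qed.

Lemma lo4_mul_lb g h : lo4 g -> lb h -> lo4 (fun u => g u * h u).
Proof.
 intros Hg [B [dB [HdB HB]]] eps He.
 set (B' := Rabs B + 1).
 assert (HB' : 0 < B') by (unfold B'; pose proof (Rabs_pos B); lra).
 destruct (Hg (eps / B')) as [d1 [Hd1 H1]]. { apply Rdiv_lt_0_compat; auto. }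
 exists (Rmin d1 dB); split; [apply Rmin_pos; auto|].
 intros u Hu.
 assert (A1 := H1 u (Rlt_le_trans _ _ _ Hu (Rmin_l _ _))).
 assert (A2 := HB u (Rlt_le_trans _ _ _ Hu (Rmin_r _ _))).
 rewrite Rabs_mult.
 assert (A3 : Rabs (h u) <= B') by (unfold B'; pose proof (Rle_abs B); lra).
 apply Rle_trans with (eps / B' * u^4 * B').
 - apply Rmult_le_compat; auto using Rabs_pos.
 - right; field; lra.
Qed.

Lemma lb_const c : lb (fun _ => c).
Proof. exists (Rabs c), 1; split; [lra|]. intros; lra. Qed.

Lemma lo4_sc c g : lo4 g -> lo4 (fun u => c * g u).
Proof.
  intro H. apply lo4_ext with (fun u => g u * c); [intro; ring|].
  apply lo4_mul_lb; auto using lb_const.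
Qed.

Lemma lo4_u5 h : lb h -> lo4 (fun u => u^5 * h u).
Proof.
 intros [B [dB [HdB HB]]] eps He.
 set (B' := Rabs B + 1).
 assert (HB' : 0 < B') by (unfold B'; pose proof (Rabs_pos B); lra).
 exists (Rmin dB (eps / B')); split; [apply Rmin_pos; auto; apply Rdiv_lt_0_compat; auto|].
 intros u Hu.
 assert (A1 := HB u (Rlt_le_trans _ _ _ Hu (Rmin_l _ _))).
 assert (A2 : Rabs u < eps / B') by (apply (Rlt_le_trans _ _ _ Hu (Rmin_r _ _))).
 assert (A3 : Rabs (h u) <= B') by (unfold B'; pose proof (Rle_abs B); lra).
 replace (u^5) with (u * u^4) by ring.
 rewrite !Rabs_mult, (Rabs_pos_eq (u^4)) by apply u4_nonneg.
 pose proof (u4_nonneg u).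
 apply Rle_trans with ((eps / B') * u^4 * B').
 - apply Rmult_le_compat; auto using Rabs_pos.
   + apply Rmult_le_pos; auto using Rabs_pos.
   + apply Rmult_le_compat_r; lra.
 - right; field; lra.
Qed.

Lemma abs_term_le c u n : Rabs u <= 1 -> Rabs (c * u^n) <= Rabs c.
Proof.
  intro H. rewrite Rabs_mult. pose proof (pow_abs_le1 u n H). pose proof (Rabs_pos c).
  pose proof (Rabs_pos (u^n)). nra.
Qed.

Lemma ev_bound x u : Rabs u <= 1 ->
  Rabs (ev x u) <= Rabs (k0 x) + Rabs (k1 x) + Rabs (k2 x) + Rabs (k3 x) + Rabs (k4 x).
Proof.
  intro H. unfold ev.
  pose proof (abs_term_le (k1 x) u 1 H). pose proof (abs_term_le (k2 x) u 2 H).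
  pose proof (abs_term_le (k3 x) u 3 H). pose proof (abs_term_le (k4 x) u 4 H).
  rewrite pow_1 in H0.
  pose proof (Rabs_triang (k0 x + k1 x * u + k2 x * u ^ 2 + k3 x * u ^ 3) (k4 x * u^4)).
  pose proof (Rabs_triang (k0 x + k1 x * u + k2 x * u ^ 2) (k3 x * u ^ 3)).
  pose proof (Rabs_triang (k0 x + k1 x * u) (k2 x * u ^ 2)).
  pose proof (Rabs_triang (k0 x) (k1 x * u)). lra.
Qed.

Lemma lb_ev x : lb (ev x).
Proof.
  eexists; exists 1; split; [lra|]. intros u Hu. apply ev_bound; lra.
Qed.

Lemma lb_asym X x : asym X x -> lb X.
Proof.
  intro H. destruct (H 1) as [d [Hd Hu]]; [lra|].
  exists (1 + (Rabs (k0 x) + Rabs (k1 x) + Rabs (k2 x) + Rabs (k3 x) + Rabs (k4 x))), (Rmin d 1).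
  split; [apply Rmin_pos; lra|].
  intros u Hu'.
  assert (A1 := Hu u (Rlt_le_trans _ _ _ Hu' (Rmin_l _ _))).
  assert (A2 : Rabs u <= 1) by (pose proof (Rmin_r d 1); lra).
  assert (A3 := ev_bound x u A2).
  assert (A4 := pow_abs_le1 u 4 A2). rewrite Rabs_pos_eq in A4 by apply u4_nonneg.
  replace (X u) with ((X u - ev x u) + ev x u) by ring.
  eapply Rle_trans; [apply Rabs_triang|]. lra.
Qed.

Definition add4 x y := mk (k0 x + k0 y) (k1 x + k1 y) (k2 x + k2 y) (k3 x + k3 y) (k4 x + k4 y).
Definition sc c x := mk (c * k0 x) (c * k1 x) (c * k2 x) (c * k3 x) (c * k4 x).
Definition cst c := mk c 0 0 0 0.
Definition mul4 x y := mk (k0 x * k0 y) (k0 x * k1 y + k1 x * k0 y)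
  (k0 x * k2 y + k1 x * k1 y + k2 x * k0 y)
  (k0 x * k3 y + k1 x * k2 y + k2 x * k1 y + k3 x * k0 y)
  (k0 x * k4 y + k1 x * k3 y + k2 x * k2 y + k3 x * k1 y + k4 x * k0 y).
Definition hi4 x y := mk (k1 x * k4 y + k2 x * k3 y + k3 x * k2 y + k4 x * k1 y)
  (k2 x * k4 y + k3 x * k3 y + k4 x * k2 y) (k3 x * k4 y + k4 x * k3 y) (k4 x * k4 y) 0.
Definition inv4 x :=
  let y0 := / k0 x in
  let y1 := - (k1 x * y0) * y0 in
  let y2 := - (k1 x * y1 + k2 x * y0) * y0 in
  let y3 := - (k1 x * y2 + k2 x * y1 + k3 x * y0) * y0 in
  let y4 := - (k1 x * y3 + k2 x * y2 + k3 x * y1 + k4 x * y0) * y0 in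
  mk y0 y1 y2 y3 y4.

Lemma asym_add X Y x y : asym X x -> asym Y y -> asym (fun u => X u + Y u) (add4 x y).
Proof.
  intros H1 H2. eapply lo4_ext; [|apply (lo4_add _ _ H1 H2)].
  intro u; unfold ev, add4; simpl; ring.
Qed.

Lemma asym_sc c X x : asym X x -> asym (fun u => c * X u) (sc c x).
Proof.
  intros H1. eapply lo4_ext; [|apply (lo4_sc c _ H1)].
  intro u; unfold ev, sc; simpl; ring.
Qed.

Lemma lo4_zero : lo4 (fun _ => 0).
Proof. intros eps He. exists 1; split; [lra|]. intros. rewrite Rabs_R0. apply Rmult_le_pos; [lra|apply u4_nonneg]. Qed.

Lemma asym_cst c : asym (fun _ => c) (cst c).
Proof. eapply lo4_ext; [|apply lo4_zero]. intro u; unfold ev, cst; simpl; ring. Qed.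

Lemma asym_id : asym (fun u => u) (mk 0 1 0 0 0).
Proof. eapply lo4_ext; [|apply lo4_zero]. intro u; unfold ev; simpl; ring. Qed.

Lemma asym_ev x : asym (ev x) x.
Proof. eapply lo4_ext; [|apply lo4_zero]. intro u; simpl; ring. Qed.

Lemma asym_ext_loc X Y x : (exists d, 0 < d /\ forall u, Rabs u < d -> X u = Y u) -> asym X x -> asym Y x.
Proof.
  intros [d [Hd E]] H. eapply lo4_ext_loc; [|apply H].
  exists d; split; auto. intros u Hu; rewrite E; auto.
Qed.

Lemma asym_ext X Y x : (forall u, X u = Y u) -> asym X x -> asym Y x.
Proof. intros E. apply asym_ext_loc. exists 1; split; [lra|]. auto. Qed.

Lemma asym_mul X Y x y : asym X x -> asym Y y -> asym (fun u => X u * Y u) (mul4 x y).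
Proof.
  intros H1 H2.
  eapply lo4_ext with (fun u => ((X u - ev x u) * Y u + (Y u - ev y u) * ev x u) + u^5 * ev (hi4 x y) u).
  - intro u. unfold ev, mul4, hi4; simpl; ring.
  - apply lo4_add; [apply lo4_add|].
    + apply lo4_mul_lb; auto. eapply lb_asym; eauto.
    + apply lo4_mul_lb; auto. apply lb_ev.
    + apply lo4_u5, lb_ev.
Qed.

Lemma ev_k0_bound x u : Rabs u <= 1 ->
  Rabs (ev x u - k0 x) <= Rabs u * (Rabs (k1 x) + Rabs (k2 x) + Rabs (k3 x) + Rabs (k4 x)).
Proof.
  intro H. replace (ev x u - k0 x) with (u * ev (mk (k1 x) (k2 x) (k3 x) (k4 x) 0) u)
    by (unfold ev; simpl; ring).
  rewrite Rabs_mult. apply Rmult_le_compat_l; [apply Rabs_pos|].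
  eapply Rle_trans; [apply ev_bound; auto|]. simpl. rewrite Rabs_R0. lra.
Qed.

Lemma u4_le_abs u : Rabs u <= 1 -> u^4 <= Rabs u.
Proof.
  intro H. rewrite pow4_abs. pose proof (Rabs_pos u).
  assert (Rabs u ^ 3 <= 1) by (rewrite RPow_abs; apply pow_abs_le1; auto).
  assert (0 <= Rabs u ^ 3) by (apply pow_le; auto).
  replace (Rabs u ^ 4) with (Rabs u * Rabs u ^ 3) by ring. nra.
Qed.

Lemma asym_nz X x : asym X x -> k0 x <> 0 ->
  exists d, 0 < d /\ forall u, Rabs u < d -> Rabs (k0 x) / 2 <= Rabs (X u).
Proof.
  intros H Hx. destruct (H 1) as [d [Hd Hu]]; [lra|].
  set (S := Rabs (k1 x) + Rabs (k2 x) + Rabs (k3 x) + Rabs (k4 x) + 1).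
  assert (HS : 0 < S) by (unfold S; pose proof (Rabs_pos (k1 x)); pose proof (Rabs_pos (k2 x));
     pose proof (Rabs_pos (k3 x)); pose proof (Rabs_pos (k4 x)); lra).
  assert (Ha : 0 < Rabs (k0 x)) by (apply Rabs_pos_lt; auto).
  exists (Rmin (Rmin d 1) (Rabs (k0 x) / (2 * S))).
  split. { repeat apply Rmin_pos; try lra. apply Rdiv_lt_0_compat; lra. }
  intros u Hu'.
  assert (A0 : Rabs u < d) by (pose proof (Rmin_l (Rmin d 1) (Rabs (k0 x) / (2 * S))); pose proof (Rmin_l d 1); lra).
  assert (A1 : Rabs u <= 1) by (pose proof (Rmin_l (Rmin d 1) (Rabs (k0 x) / (2 * S))); pose proof (Rmin_r d 1); lra).
  assert (A2 : Rabs u < Rabs (k0 x) / (2 * S)) by (pose proof (Rmin_r (Rmin d 1) (Rabs (k0 x) / (2 * S))); lra).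
  assert (B1 := Hu u A0). assert (B2 := ev_k0_bound x u A1). assert (B3 := u4_le_abs u A1).
  assert (B4 : Rabs u * S < Rabs (k0 x) / 2).
  { apply Rmult_lt_compat_r with (r := S) in A2; auto.
    replace (Rabs (k0 x) / (2 * S) * S) with (Rabs (k0 x) / 2) in A2 by (field; lra). lra. }
  pose proof (Rabs_triang (X u - ev x u) (ev x u - k0 x)).
  replace (X u - ev x u + (ev x u - k0 x)) with (X u - k0 x) in H0 by ring.
  pose proof (Rabs_triang_inv (k0 x) (k0 x - X u)).
  replace (k0 x - (k0 x - X u)) with (X u) in H1 by ring.
  rewrite Rabs_minus_sym in H0.
  unfold S in B4. pose proof (Rabs_pos u). nra.
Qed.

Lemma lb_inv X x : asym X x -> k0 x <> 0 -> lb (fun u => / X u).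
Proof.
  intros H Hx. destruct (asym_nz X x H Hx) as [d [Hd Hu]].
  assert (Ha : 0 < Rabs (k0 x)) by (apply Rabs_pos_lt; auto).
  exists (2 / Rabs (k0 x)), d; split; auto. intros u Hu'.
  assert (A := Hu u Hu').
  assert (0 < Rabs (X u)) by lra.
  rewrite Rabs_inv. replace (2 / Rabs (k0 x)) with (/ (Rabs (k0 x) / 2)) by (field; lra).
  apply Rinv_le_contravar; lra.
Qed.

Lemma mul4_inv4 x : k0 x <> 0 -> mul4 x (inv4 x) = mk 1 0 0 0 0.
Proof. intro H. unfold mul4, inv4; simpl. f_equal; field; auto. Qed.

Lemma asym_inv X x : asym X x -> k0 x <> 0 -> asym (fun u => / X u) (inv4 x).
Proof.
  intros H Hx. destruct (asym_nz X x H Hx) as [d [Hd Hu]].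
  assert (Ha : 0 < Rabs (k0 x)) by (apply Rabs_pos_lt; auto).
  apply lo4_ext_loc with (fun u => (-1) * (X u * ev (inv4 x) u - ev (mul4 x (inv4 x)) u) * / X u).
  - exists d; split; auto. intros u Hu'. assert (A := Hu u Hu').
    assert (X u <> 0) by (intro E; rewrite E, Rabs_R0 in A; lra).
    rewrite mul4_inv4 by auto. unfold ev at 2; simpl. field; auto.
  - apply lo4_mul_lb; [|eapply lb_inv; eauto].
    apply lo4_sc. apply (asym_mul X (ev (inv4 x)) x (inv4 x) H (asym_ev _)).
Qed.

Lemma lin_bound E e : asym E e -> k0 e = 0 ->
  exists C d, 0 < C /\ 0 < d /\ forall u, Rabs u < d -> Rabs (E u) <= C * Rabs u.
Proof.
  intros H He. destruct (H 1) as [d [Hd Hu]]; [lra|].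
  exists (Rabs (k1 e) + Rabs (k2 e) + Rabs (k3 e) + Rabs (k4 e) + 1), (Rmin d 1).
  split. { pose proof (Rabs_pos (k1 e)); pose proof (Rabs_pos (k2 e));
     pose proof (Rabs_pos (k3 e)); pose proof (Rabs_pos (k4 e)); lra. }
  split. { apply Rmin_pos; lra. }
  intros u Hu'.
  assert (A0 : Rabs u < d) by (pose proof (Rmin_l d 1); lra).
  assert (A1 : Rabs u <= 1) by (pose proof (Rmin_r d 1); lra).
  assert (B1 := Hu u A0). assert (B2 := ev_k0_bound e u A1). assert (B3 := u4_le_abs u A1).
  rewrite He, Rminus_0_r in B2.
  pose proof (Rabs_triang (E u - ev e u) (ev e u)).
  replace (E u - ev e u + ev e u) with (E u) in H0 by ring. lra.
Qed.

Lemma lo4_comp g E e : lo4 g -> asym E e -> k0 e = 0 -> lo4 (fun u => g (E u)).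
Proof.
  intros Hg HE He eps Heps.
  destruct (lin_bound E e HE He) as [C [d [HC [Hd Hb]]]].
  assert (HC4 : 0 < C^4) by (apply pow_lt; auto).
  destruct (Hg (eps / C^4)) as [dg [Hdg Hg']]. { apply Rdiv_lt_0_compat; auto. }
  exists (Rmin d (dg / C)). split. { apply Rmin_pos; auto. apply Rdiv_lt_0_compat; auto. }
  intros u Hu.
  assert (A0 : Rabs u < d) by (pose proof (Rmin_l d (dg / C)); lra).
  assert (A1 : Rabs u < dg / C) by (pose proof (Rmin_r d (dg / C)); lra).
  assert (B := Hb u A0).
  assert (B2 : Rabs (E u) < dg).
  { apply Rmult_lt_compat_l with (r := C) in A1; auto.
    replace (C * (dg / C)) with dg in A1 by (field; lra). lra. }
  eapply Rle_trans; [apply (Hg' _ B2)|].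
  rewrite (pow4_abs (E u)).
  assert (Rabs (E u) ^ 4 <= (C * Rabs u) ^ 4) by (apply pow_incr; split; auto using Rabs_pos).
  rewrite Rpow_mult_distr, <- (pow4_abs u) in H.
  apply Rle_trans with (eps / C ^ 4 * (C^4 * u^4)).
  - apply Rmult_le_compat_l; auto. apply Rlt_le, Rdiv_lt_0_compat; auto.
  - right; field; lra.
Qed.

Definition comp4 f e :=
  add4 (add4 (add4 (add4 (cst (k0 f)) (sc (k1 f) e)) (sc (k2 f) (mul4 e e)))
     (sc (k3 f) (mul4 (mul4 e e) e))) (sc (k4 f) (mul4 (mul4 (mul4 e e) e) e)).

Lemma asym_comp F f E e : asym F f -> asym E e -> k0 e = 0 -> asym (fun u => F (E u)) (comp4 f e).
Proof.
  intros HF HE He.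
  assert (H2 : asym (fun u => ev f (E u)) (comp4 f e)).
  { apply asym_ext with (fun u => k0 f + k1 f * E u + k2 f * (E u * E u) + k3 f * (E u * E u * E u)
       + k4 f * (E u * E u * E u * E u)).
    { intro u; unfold ev; ring. }
    unfold comp4. repeat apply asym_add.
    - apply asym_cst.
    - apply asym_sc, HE.
    - apply asym_sc, asym_mul; apply HE.
    - apply asym_sc, asym_mul; [apply asym_mul|]; apply HE.
    - apply asym_sc, asym_mul; [apply asym_mul; [apply asym_mul|]|]; apply HE. }
  eapply lo4_ext; [|apply (lo4_add _ _ (lo4_comp _ E e HF HE He) H2)].
  intro u; simpl; ring.
Qed.

Lemma core a h : lb h ->
  (forall eps, 0 < eps -> exists d, 0 < d /\ forall u, 0 < Rabs u < d -> Rabs (a + u * h u) <= eps) -> a = 0.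
Proof.
  intros [B [dB [HdB HB]]] H. destruct (Req_dec a 0) as [|Ha]; auto. exfalso.
  assert (Hpa: 0 < Rabs a) by (apply Rabs_pos_lt; auto).
  destruct (H (Rabs a / 2)) as [d [Hd Hu]]; [lra|].
  set (B' := Rabs B + 1).
  assert (HB' : 0 < B') by (unfold B'; pose proof (Rabs_pos B); lra).
  set (m := Rmin (Rmin d dB) (Rabs a / (2*B'))).
  assert (Hm : 0 < m) by (unfold m; repeat apply Rmin_pos; auto; apply Rdiv_lt_0_compat; lra).
  set (u := m / 2).
  assert (Hu0 : Rabs u = u) by (apply Rabs_pos_eq; unfold u; lra).
  assert (M1 : m <= d) by (unfold m; pose proof (Rmin_l (Rmin d dB) (Rabs a / (2*B'))); pose proof (Rmin_l d dB); lra).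
  assert (M2 : m <= dB) by (unfold m; pose proof (Rmin_l (Rmin d dB) (Rabs a / (2*B'))); pose proof (Rmin_r d dB); lra).
  assert (M3 : m <= Rabs a / (2*B')) by (unfold m; apply Rmin_r).
  assert (A1 : Rabs (a + u * h u) <= Rabs a / 2) by (apply Hu; rewrite Hu0; unfold u; lra).
  assert (A2 : Rabs (h u) <= B) by (apply HB; rewrite Hu0; unfold u; lra).
  assert (A3 : Rabs (h u) <= B') by (unfold B'; pose proof (Rle_abs B); lra).
  pose proof (Rabs_triang (a + u * h u) (- (u * h u))).
  replace (a + u * h u + - (u * h u)) with a in H0 by ring.
  rewrite Rabs_Ropp, Rabs_mult, Hu0 in H0.
  assert (u * B' < Rabs a / 2).
  { assert (u < Rabs a / (2*B')) by (unfold u; lra).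
    apply Rmult_lt_compat_r with (r := B') in H1; auto.
    replace (Rabs a / (2 * B') * B') with (Rabs a / 2) in H1 by (field; lra). lra. }
  assert (u * Rabs (h u) <= u * B') by (apply Rmult_le_compat_l; [unfold u; lra|exact A3]).
  lra.
Qed.

Lemma divk k u w eps : (k <= 4)%nat -> 0 < Rabs u <= 1 -> 0 <= eps ->
  Rabs u ^ k * w <= eps * u^4 -> w <= eps.
Proof.
  intros Hk Hu He H.
  rewrite pow4_abs in H.
  replace 4%nat with (k + (4 - k))%nat in H by lia.
  rewrite pow_add in H.
  assert (P1 : 0 < Rabs u ^ k) by (apply pow_lt; lra).
  assert (P2 : Rabs u ^ (4 - k) <= 1) by (rewrite RPow_abs; apply pow_abs_le1; lra).
  assert (P3 : 0 <= Rabs u ^ (4 - k)) by (apply pow_le; lra).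
  apply Rmult_le_reg_l with (Rabs u ^ k); auto.
  apply Rle_trans with (eps * (Rabs u ^ k * Rabs u ^ (4 - k))); auto.
  replace (eps * (Rabs u ^ k * Rabs u ^ (4 - k))) with ((Rabs u ^ k) * (eps * Rabs u ^ (4 - k))) by ring.
  apply Rmult_le_compat_l; [lra|]. nra.
Qed.

Lemma coef_zero k a h g : (k <= 4)%nat -> lb h -> lo4 g ->
  (forall u, g u = u^k * (a + u * h u)) -> a = 0.
Proof.
  intros Hk Hh Hg E. apply (core a h Hh).
  intros eps He. destruct (Hg eps He) as [d [Hd Hu]].
  exists (Rmin d 1); split; [apply Rmin_pos; lra|].
  intros u [Hu1 Hu2].
  assert (A0 : Rabs u < d) by (pose proof (Rmin_l d 1); lra).
  assert (A1 : Rabs u <= 1) by (pose proof (Rmin_r d 1); lra).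
  apply (divk k u _ eps); auto; try lra.
  rewrite RPow_abs, <- Rabs_mult, <- E. auto.
Qed.

Lemma lo4_ev_zero z : lo4 (ev z) -> z = mk 0 0 0 0 0.
Proof.
  intro H. destruct z as [z0 z1 z2 z3 z4].
  assert (E0 : z0 = 0).
  { apply (coef_zero 0 z0 (ev (mk z1 z2 z3 z4 0)) (ev (mk z0 z1 z2 z3 z4))); auto; [apply lb_ev|].
    intro u; unfold ev; simpl; ring. }
  subst z0.
  assert (E1 : z1 = 0).
  { apply (coef_zero 1 z1 (ev (mk z2 z3 z4 0 0)) (ev (mk 0 z1 z2 z3 z4))); auto; [apply lb_ev|].
    intro u; unfold ev; simpl; ring. }
  subst z1.
  assert (E2 : z2 = 0).
  { apply (coef_zero 2 z2 (ev (mk z3 z4 0 0 0)) (ev (mk 0 0 z2 z3 z4))); auto; [apply lb_ev|].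
    intro u; unfold ev; simpl; ring. }
  subst z2.
  assert (E3 : z3 = 0).
  { apply (coef_zero 3 z3 (ev (mk z4 0 0 0 0)) (ev (mk 0 0 0 z3 z4))); auto; [apply lb_ev|].
    intro u; unfold ev; simpl; ring. }
  subst z3.
  assert (E4 : z4 = 0).
  { apply (coef_zero 4 z4 (fun _ => 0) (ev (mk 0 0 0 0 z4))); auto; [apply lb_const|].
    intro u; unfold ev; simpl; ring. }
  subst z4. reflexivity.
Qed.

Lemma asym_unique X x y : asym X x -> asym X y -> x = y.
Proof.
  intros H1 H2.
  assert (H : lo4 (ev (add4 y (sc (-1) x)))).
  { eapply lo4_ext; [|apply (lo4_add _ _ H1 (lo4_sc (-1) _ H2))].
    intro u; unfold ev, add4, sc; simpl; ring. }
  apply lo4_ev_zero in H. unfold add4, sc in H. destruct x, y; simpl in *.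
  injection H; intros; f_equal; lra.
Qed.

Definition fX (X : R -> R -> R) (u : R) := X (1 - u) (1 + u).

Lemma mean_rep X : homogeneous_mean X -> forall A B, 0 < A -> 0 < B ->
  X A B = (A + B) / 2 * fX X ((B - A) / (A + B)).
Proof.
  intros H A B HA HB. unfold fX.
  rewrite <- H.
  - f_equal; field; lra.
  - lra.
  - replace (1 - (B - A) / (A + B)) with (2 * A / (A + B)) by (field; lra).
    apply Rdiv_lt_0_compat; lra.
  - replace (1 + (B - A) / (A + B)) with (2 * B / (A + B)) by (field; lra).
    apply Rdiv_lt_0_compat; lra.
Qed.

Lemma zero_lim a : (forall eps, 0 < eps -> exists d, 0 < d /\ forall u, 0 < u < d -> Rabs a <= eps + u) -> a = 0.
Proof.
  intro H. destruct (Req_dec a 0) as [|Ha]; auto. exfalso.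
  assert (Hpa: 0 < Rabs a) by (apply Rabs_pos_lt; auto).
  destruct (H (Rabs a / 4)) as [d [Hd Hu]]; [lra|].
  pose proof (Rmin_l d (Rabs a / 4)). pose proof (Rmin_r d (Rabs a / 4)).
  assert (0 < Rmin d (Rabs a / 4)) by (apply Rmin_pos; lra).
  specialize (Hu (Rmin d (Rabs a / 4) / 2)). lra.
Qed.

Lemma mean_at1 X : is_mean X -> X 1 1 = 1.
Proof.
  intro H. destruct (H 1 1) as [_ [H1 H2]]; try lra.
  rewrite Rmin_left in H1 by lra. rewrite Rmax_left in H2 by lra. lra.
Qed.

Lemma mean_near1 X u : is_mean X -> 0 <= u < 1 -> Rabs (fX X u - 1) <= u.
Proof.
  intros H Hu. unfold fX. destruct (H (1 - u) (1 + u)) as [_ [H1 H2]]; try lra.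
  rewrite Rmin_left in H1 by lra. rewrite Rmax_right in H2 by lra.
  apply Rabs_le; lra.
Qed.

Lemma fX_sym X u : symmetric_mean X -> Rabs u < 1 -> fX X (- u) = fX X u.
Proof.
  intros H Hu. unfold fX. apply Rabs_def2 in Hu.
  replace (1 - - u) with (1 + u) by ring. replace (1 + - u) with (1 - u) by ring.
  apply H; lra.
Qed.

Lemma homog_inv X u : homogeneous_mean X -> 0 < u < 1 ->
  X (/ u - 1) (/ u + 1) = / u * fX X u.
Proof.
  intros H Hu. unfold fX. rewrite <- H.
  - f_equal; field; lra.
  - apply Rinv_0_lt_compat; lra.
  - lra.
  - lra.
Qed.

Lemma mean_exp X a : is_mean X -> symmetric_mean X -> homogeneous_mean X ->
  has_sym_asymp_expansion X a -> asym (fX X) (mk 1 0 (a 1%nat) 0 (a 2%nat)).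
Proof.
  intros Hm Hs Hh He.
  assert (Ha0 : a 0%nat = 1).
  { assert (a 0%nat - 1 = 0); [|lra]. apply zero_lim.
    intros eps Heps. destruct (He 1 0%nat eps Heps) as [X0 HX0].
    exists (/ (Rmax X0 1 + 1)).
    assert (P0 : 0 < Rmax X0 1 + 1) by (pose proof (Rmax_r X0 1); lra).
    split; [apply Rinv_0_lt_compat; auto|].
    intros u [Hu1 Hu2].
    assert (Hx : Rmax X0 1 + 1 < / u).
    { rewrite <- (Rinv_inv (Rmax X0 1 + 1)). apply Rinv_lt_contravar; auto. nra. }
    assert (Hu3 : u < 1).
    { pose proof (Rmax_r X0 1). assert (1 < / u) by lra.
      rewrite <- Rinv_1. rewrite <- (Rinv_inv u). apply Rinv_lt_contravar; auto; lra. }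
    assert (B := HX0 (/ u) ltac:(pose proof (Rmax_l X0 1); lra)).
    unfold sym_partial_sum in B; simpl in B.
    rewrite homog_inv in B by (auto; lra).
    replace (/ u * fX X u - a 0%nat * 1 * (/ u * 1)) with (/ u * (fX X u - a 0%nat)) in B by ring.
    replace (eps * (/ u * 1)) with (/ u * eps) in B by ring.
    rewrite Rabs_mult, Rabs_pos_eq in B by (apply Rlt_le, Rinv_0_lt_compat; lra).
    apply Rmult_le_reg_l in B; [|apply Rinv_0_lt_compat; lra].
    pose proof (mean_near1 X u Hm ltac:(lra)).
    pose proof (Rabs_triang (fX X u - a 0%nat) (- (fX X u - 1))).
    rewrite Rabs_Ropp in H0.
    replace (fX X u - a 0%nat + - (fX X u - 1)) with (- (a 0%nat - 1)) in H0 by ring.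
    rewrite Rabs_Ropp in H0. lra. }
  assert (Hpos : forall eps, 0 < eps -> exists d, 0 < d /\ d <= 1 /\ forall u, 0 < u < d ->
     Rabs (fX X u - ev (mk 1 0 (a 1%nat) 0 (a 2%nat)) u) <= eps * u ^ 4).
  { intros eps Heps. destruct (He 1 2%nat eps Heps) as [X0 HX0].
    exists (/ (Rmax X0 1 + 1)).
    assert (P0 : 0 < Rmax X0 1 + 1) by (pose proof (Rmax_r X0 1); lra).
    split; [apply Rinv_0_lt_compat; auto|].
    split. { assert (Q : 1 <= Rmax X0 1 + 1) by (pose proof (Rmax_r X0 1); lra).
      pose proof (Rinv_le_contravar 1 _ ltac:(lra) Q). rewrite Rinv_1 in H. exact H. }
    intros u [Hu1 Hu2].
    assert (Hx : Rmax X0 1 + 1 < / u).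
    { rewrite <- (Rinv_inv (Rmax X0 1 + 1)). apply Rinv_lt_contravar; auto. nra. }
    assert (Hu3 : u < 1).
    { pose proof (Rmax_r X0 1). assert (1 < / u) by lra.
      rewrite <- Rinv_1. rewrite <- (Rinv_inv u). apply Rinv_lt_contravar; auto; lra. }
    assert (B := HX0 (/ u) ltac:(pose proof (Rmax_l X0 1); lra)).
    unfold sym_partial_sum in B; simpl in B.
    rewrite homog_inv in B by (auto; lra).
    rewrite Ha0 in B.
    replace (/ u * fX X u -
        (1 * 1 * (/ u * 1) + a 1%nat * (1 * (1 * 1)) * / (/ u * 1) +
         a 2%nat * (1 * (1 * (1 * (1 * 1)))) * / (/ u * (/ u * (/ u * 1)))))
      with (/ u * (fX X u - ev (mk 1 0 (a 1%nat) 0 (a 2%nat)) u)) in B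
      by (unfold ev; simpl; field; lra).
    replace (eps * / (/ u * (/ u * (/ u * 1)))) with (/ u * (eps * u ^ 4)) in B by (field; lra).
    rewrite Rabs_mult, Rabs_pos_eq in B by (apply Rlt_le, Rinv_0_lt_compat; lra).
    apply Rmult_le_reg_l in B; [|apply Rinv_0_lt_compat; lra]. exact B. }
  intros eps Heps. destruct (Hpos eps Heps) as [d [Hd [Hd1 Hb]]].
  exists d; split; auto. intros u Hu.
  destruct (Rtotal_order u 0) as [Hn|[Hz|Hp]].
  - rewrite <- fX_sym by (auto; lra).
    replace (ev (mk 1 0 (a 1%nat) 0 (a 2%nat)) u) with (ev (mk 1 0 (a 1%nat) 0 (a 2%nat)) (- u))
      by (unfold ev; simpl; ring).
    replace (u ^ 4) with ((- u) ^ 4) by ring.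
    apply Hb. rewrite Rabs_left in Hu by lra. lra.
  - subst u. unfold fX. replace (1 - 0) with 1 by ring. replace (1 + 0) with 1 by ring.
    rewrite mean_at1 by auto. unfold ev; simpl.
    replace (1 - (1 + 0 * 0 + a 1%nat * (0 * (0 * 1)) + 0 * (0 * (0 * (0 * 1))) + a 2%nat * (0 * (0 * (0 * (0 * 1))))))
      with 0 by ring. rewrite Rabs_R0. lra.
  - apply Hb. rewrite Rabs_right in Hu by lra. lra.
Qed.

Definition meanT f a b :=
  mul4 (sc (1/2) (add4 a b)) (comp4 f (mul4 (add4 b (sc (-1) a)) (inv4 (add4 a b)))).

Lemma mean_asym X f A B a b : homogeneous_mean X -> asym (fX X) f -> asym A a -> asym B b ->
  k0 a + k0 b <> 0 -> k0 a = k0 b ->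
  (exists d, 0 < d /\ forall u, Rabs u < d -> 0 < A u /\ 0 < B u) ->
  asym (fun u => X (A u) (B u)) (meanT f a b).
Proof.
  intros HX HF HA HB Hnz Heq [d [Hd Hpos]].
  apply asym_ext_loc with (fun u => (1/2 * (A u + B u)) * fX X ((B u + -1 * A u) * / (A u + B u))).
  - exists d; split; auto. intros u Hu. destruct (Hpos u Hu).
    rewrite (mean_rep X HX (A u) (B u)) by lra. f_equal; [field|]. f_equal. field. lra.
  - unfold meanT. apply asym_mul.
    + apply asym_sc. apply asym_add; auto.
    + apply (asym_comp (fX X) f (fun u => (B u + -1 * A u) * / (A u + B u))); auto.
      * apply asym_mul. apply asym_add; auto. apply asym_sc; auto.
        apply (asym_inv (fun u => A u + B u)); auto. apply asym_add; auto.
      * simpl. rewrite Heq. ring.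
Qed.

Lemma comp4_e0 c0 p q e : k0 e = 0 -> comp4 (mk c0 0 p 0 q) e =
  mk c0 0 (p * k1 e ^ 2) (2 * p * k1 e * k2 e) (p * (k2 e ^ 2 + 2 * k1 e * k3 e) + q * k1 e ^ 4).
Proof. intro H. destruct e as [e0 e1 e2 e3 e4]; simpl in H; subst e0.
  unfold comp4, mul4, add4, sc, cst; simpl. f_equal; ring. Qed.

Lemma PT_eq al be p q : meanT (mk 1 0 p 0 q) (mk 1 (-1) 0 0 0) (mk 1 0 al 0 be) = (mk ((1)) ((-1/2)) ((1/4)*p + (1/2)*al) ((1/8)*p + (1/2)*al*p) ((1/16)*q + (1/16)*p + (1/2)*be + (1/8)*al*p + (1/4)*al^2*p)).
Proof.
  unfold meanT.
  replace (add4 (mk 1 (-1) 0 0 0) (mk 1 0 al 0 be)) with (mk ((2)) ((-1)) ((1)*al) 0 ((1)*be)) by (unfold add4; simpl; f_equal; field).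
  replace (inv4 (mk ((2)) ((-1)) ((1)*al) 0 ((1)*be))) with (mk ((1/2)) ((1/4)) ((1/8) + (-1/4)*al) ((1/16) + (-1/4)*al) ((1/32) + (-1/4)*be + (-3/16)*al + (1/8)*al^2)) by (unfold inv4; simpl; f_equal; field).
  replace (add4 (mk 1 0 al 0 be) (sc (-1) (mk 1 (-1) 0 0 0))) with (mk 0 ((1)) ((1)*al) 0 ((1)*be)) by (unfold add4, sc; simpl; f_equal; field).
  replace (mul4 (mk 0 ((1)) ((1)*al) 0 ((1)*be)) (mk ((1/2)) ((1/4)) ((1/8) + (-1/4)*al) ((1/16) + (-1/4)*al) ((1/32) + (-1/4)*be + (-3/16)*al + (1/8)*al^2))) with (mk 0 ((1/2)) ((1/4) + (1/2)*al) ((1/8)) ((1/16) + (1/2)*be + (-1/8)*al + (-1/4)*al^2)) by (unfold mul4; simpl; f_equal; field).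
  replace (comp4 (mk 1 0 p 0 q) (mk 0 ((1/2)) ((1/4) + (1/2)*al) ((1/8)) ((1/16) + (1/2)*be + (-1/8)*al + (-1/4)*al^2))) with (mk ((1)) 0 ((1/4)*p) ((1/4)*p + (1/2)*al*p) ((1/16)*q + (3/16)*p + (1/4)*al*p + (1/4)*al^2*p)) by (rewrite comp4_e0 by (simpl; ring); simpl; f_equal; field).
  replace (sc (1/2) (mk ((2)) ((-1)) ((1)*al) 0 ((1)*be))) with (mk ((1)) ((-1/2)) ((1/2)*al) 0 ((1/2)*be)) by (unfold sc; simpl; f_equal; field).
  unfold mul4; simpl; f_equal; field.
Qed.

Lemma QT_eq al be p q : meanT (mk 1 0 p 0 q) (mk 1 0 al 0 be) (mk 1 1 0 0 0) = (mk ((1)) ((1/2)) ((1/4)*p + (1/2)*al) ((-1/8)*p + (-1/2)*al*p) ((1/16)*q + (1/16)*p + (1/2)*be + (1/8)*al*p + (1/4)*al^2*p)).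
Proof.
  unfold meanT.
  replace (add4 (mk 1 0 al 0 be) (mk 1 1 0 0 0)) with (mk ((2)) ((1)) ((1)*al) 0 ((1)*be)) by (unfold add4; simpl; f_equal; field).
  replace (inv4 (mk ((2)) ((1)) ((1)*al) 0 ((1)*be))) with (mk ((1/2)) ((-1/4)) ((1/8) + (-1/4)*al) ((-1/16) + (1/4)*al) ((1/32) + (-1/4)*be + (-3/16)*al + (1/8)*al^2)) by (unfold inv4; simpl; f_equal; field).
  replace (add4 (mk 1 1 0 0 0) (sc (-1) (mk 1 0 al 0 be))) with (mk 0 ((1)) ((-1)*al) 0 ((-1)*be)) by (unfold add4, sc; simpl; f_equal; field).
  replace (mul4 (mk 0 ((1)) ((-1)*al) 0 ((-1)*be)) (mk ((1/2)) ((-1/4)) ((1/8) + (-1/4)*al) ((-1/16) + (1/4)*al) ((1/32) + (-1/4)*be + (-3/16)*al + (1/8)*al^2))) with (mk 0 ((1/2)) ((-1/4) + (-1/2)*al) ((1/8)) ((-1/16) + (-1/2)*be + (1/8)*al + (1/4)*al^2)) by (unfold mul4; simpl; f_equal; field).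
  replace (comp4 (mk 1 0 p 0 q) (mk 0 ((1/2)) ((-1/4) + (-1/2)*al) ((1/8)) ((-1/16) + (-1/2)*be + (1/8)*al + (1/4)*al^2))) with (mk ((1)) 0 ((1/4)*p) ((-1/4)*p + (-1/2)*al*p) ((1/16)*q + (3/16)*p + (1/4)*al*p + (1/4)*al^2*p)) by (rewrite comp4_e0 by (simpl; ring); simpl; f_equal; field).
  replace (sc (1/2) (mk ((2)) ((1)) ((1)*al) 0 ((1)*be))) with (mk ((1)) ((1/2)) ((1/2)*al) 0 ((1/2)*be)) by (unfold sc; simpl; f_equal; field).
  unfold mul4; simpl; f_equal; field.
Qed.

Lemma RT_eq al be p q r s : meanT (mk 1 0 r 0 s) (mk ((1)) ((-1/2)) ((1/4)*p + (1/2)*al) ((1/8)*p + (1/2)*al*p) ((1/16)*q + (1/16)*p + (1/2)*be + (1/8)*al*p + (1/4)*al^2*p)) (mk ((1)) ((1/2)) ((1/4)*p + (1/2)*al) ((-1/8)*p + (-1/2)*al*p) ((1/16)*q + (1/16)*p + (1/2)*be + (1/8)*al*p + (1/4)*al^2*p)) = (mk ((1)) 0 ((1/4)*r + (1/4)*p + (1/2)*al) 0 ((1/16)*s + (1/16)*q + (1/16)*p + (-3/16)*p*r + (1/2)*be + (-1/8)*al*r + (1/8)*al*p + (-1/2)*al*p*r + (1/4)*al^2*p)).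
Proof.
  unfold meanT.
  replace (add4 (mk ((1)) ((-1/2)) ((1/4)*p + (1/2)*al) ((1/8)*p + (1/2)*al*p) ((1/16)*q + (1/16)*p + (1/2)*be + (1/8)*al*p + (1/4)*al^2*p)) (mk ((1)) ((1/2)) ((1/4)*p + (1/2)*al) ((-1/8)*p + (-1/2)*al*p) ((1/16)*q + (1/16)*p + (1/2)*be + (1/8)*al*p + (1/4)*al^2*p))) with (mk ((2)) 0 ((1/2)*p + (1)*al) 0 ((1/8)*q + (1/8)*p + (1)*be + (1/4)*al*p + (1/2)*al^2*p)) by (unfold add4; simpl; f_equal; field).
  replace (inv4 (mk ((2)) 0 ((1/2)*p + (1)*al) 0 ((1/8)*q + (1/8)*p + (1)*be + (1/4)*al*p + (1/2)*al^2*p))) with (mk ((1/2)) 0 ((-1/8)*p + (-1/4)*al) 0 ((-1/32)*q + (-1/32)*p + (1/32)*p^2 + (-1/4)*be + (1/16)*al*p + (1/8)*al^2 + (-1/8)*al^2*p)) by (unfold inv4; simpl; f_equal; field).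
  replace (add4 (mk ((1)) ((1/2)) ((1/4)*p + (1/2)*al) ((-1/8)*p + (-1/2)*al*p) ((1/16)*q + (1/16)*p + (1/2)*be + (1/8)*al*p + (1/4)*al^2*p)) (sc (-1) (mk ((1)) ((-1/2)) ((1/4)*p + (1/2)*al) ((1/8)*p + (1/2)*al*p) ((1/16)*q + (1/16)*p + (1/2)*be + (1/8)*al*p + (1/4)*al^2*p)))) with (mk 0 ((1)) 0 ((-1/4)*p + (-1)*al*p) 0) by (unfold add4, sc; simpl; f_equal; field).
  replace (mul4 (mk 0 ((1)) 0 ((-1/4)*p + (-1)*al*p) 0) (mk ((1/2)) 0 ((-1/8)*p + (-1/4)*al) 0 ((-1/32)*q + (-1/32)*p + (1/32)*p^2 + (-1/4)*be + (1/16)*al*p + (1/8)*al^2 + (-1/8)*al^2*p))) with (mk 0 ((1/2)) 0 ((-1/4)*p + (-1/4)*al + (-1/2)*al*p) 0) by (unfold mul4; simpl; f_equal; field).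
  replace (comp4 (mk 1 0 r 0 s) (mk 0 ((1/2)) 0 ((-1/4)*p + (-1/4)*al + (-1/2)*al*p) 0)) with (mk ((1)) 0 ((1/4)*r) 0 ((1/16)*s + (-1/4)*p*r + (-1/4)*al*r + (-1/2)*al*p*r)) by (rewrite comp4_e0 by (simpl; ring); simpl; f_equal; field).
  replace (sc (1/2) (mk ((2)) 0 ((1/2)*p + (1)*al) 0 ((1/8)*q + (1/8)*p + (1)*be + (1/4)*al*p + (1/2)*al^2*p))) with (mk ((1)) 0 ((1/4)*p + (1/2)*al) 0 ((1/16)*q + (1/16)*p + (1/2)*be + (1/8)*al*p + (1/4)*al^2*p)) by (unfold sc; simpl; f_equal; field).
  unfold mul4; simpl; f_equal; field.
Qed.

Lemma asym_lin c0 c1 : asym (fun u => c0 + c1 * u) (mk c0 c1 0 0 0).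
Proof. eapply lo4_ext; [|apply lo4_zero]. intro u; unfold ev; simpl; ring. Qed.

Lemma stab_exp K N M p q r s al be :
  is_mean K -> homogeneous_mean K -> is_mean N -> homogeneous_mean N -> is_mean M ->
  asym (fX K) (mk 1 0 r 0 s) -> asym (fX N) (mk 1 0 p 0 q) -> asym (fX M) (mk 1 0 al 0 be) ->
  stabilized K N M ->
  al = 1/4*r + 1/4*p + 1/2*al /\
  be = 1/16*s + 1/16*q + 1/16*p + (-3/16)*p*r + 1/2*be + (-1/8)*al*r + 1/8*al*p + (-1/2)*al*p*r + 1/4*al^2*p.
Proof.
  intros HmK HhK HmN HhN HmM HK HN HM Hst.
  assert (HA : asym (fun u => 1 - u) (mk 1 (-1) 0 0 0)).
  { eapply asym_ext; [|apply asym_lin]. intro; simpl; ring. }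
  assert (HB : asym (fun u => 1 + u) (mk 1 1 0 0 0)).
  { eapply asym_ext; [|apply asym_lin]. intro; simpl; ring. }
  assert (Pm : forall u, Rabs u < 1 -> 0 < fX M u).
  { intros u Hu. apply Rabs_def2 in Hu. unfold fX. apply HmM; lra. }
  assert (HP : asym (fun u => N (1 - u) (fX M u)) (meanT (mk 1 0 p 0 q) (mk 1 (-1) 0 0 0) (mk 1 0 al 0 be))).
  { apply mean_asym; auto; simpl; try lra.
    exists 1; split; [lra|]. intros u Hu. split; auto. apply Rabs_def2 in Hu; lra. }
  assert (HQ : asym (fun u => N (fX M u) (1 + u)) (meanT (mk 1 0 p 0 q) (mk 1 0 al 0 be) (mk 1 1 0 0 0))).
  { apply mean_asym; auto; simpl; try lra.
    exists 1; split; [lra|]. intros u Hu. split; auto. apply Rabs_def2 in Hu; lra. }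
  rewrite PT_eq in HP. rewrite QT_eq in HQ.
  assert (HR : asym (fun u => K (N (1 - u) (fX M u)) (N (fX M u) (1 + u)))
     (meanT (mk 1 0 r 0 s) (mk ((1)) ((-1/2)) ((1/4)*p + (1/2)*al) ((1/8)*p + (1/2)*al*p) ((1/16)*q + (1/16)*p + (1/2)*be + (1/8)*al*p + (1/4)*al^2*p)) (mk ((1)) ((1/2)) ((1/4)*p + (1/2)*al) ((-1/8)*p + (-1/2)*al*p) ((1/16)*q + (1/16)*p + (1/2)*be + (1/8)*al*p + (1/4)*al^2*p)))).
  { apply mean_asym; auto; simpl; try lra.
    exists 1; split; [lra|]. intros u Hu. assert (Hu' := Hu). apply Rabs_def2 in Hu'.
    assert (0 < fX M u) by auto.
    split; apply HmN; lra. }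
  rewrite RT_eq in HR.
  assert (HR2 : asym (fX M) (mk ((1)) 0 ((1/4)*r + (1/4)*p + (1/2)*al) 0 ((1/16)*s + (1/16)*q + (1/16)*p + (-3/16)*p*r + (1/2)*be + (-1/8)*al*r + (1/8)*al*p + (-1/2)*al*p*r + (1/4)*al^2*p))).
  { eapply asym_ext_loc; [|apply HR].
    exists 1; split; [lra|]. intros u Hu. unfold fX at 3.
    assert (Hu' := Hu). apply Rabs_def2 in Hu'.
    rewrite (Hst (1 - u) (1 + u)) by lra. reflexivity. }
  assert (E := asym_unique _ _ _ HM HR2).
  injection E; intros E4 E2. split; lra.
Qed.

Theorem mainTheorem10 (K N M : R -> R -> R) (aK aN aM : nat -> R) :
  is_mean K -> symmetric_mean K -> homogeneous_mean K -> stable_mean K ->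
  is_mean N -> symmetric_mean N -> homogeneous_mean N -> stable_mean N ->
  is_mean M -> symmetric_mean M -> homogeneous_mean M ->
  has_sym_asymp_expansion K aK ->
  has_sym_asymp_expansion N aN ->
  has_sym_asymp_expansion M aM ->
  stabilized K N M -> stabilized N K M ->
  (aK 1%nat = aN 1%nat \/ aK 1%nat + aN 1%nat = -1) /\
  (aK 1%nat = aN 1%nat ->
     aM 1%nat = aK 1%nat /\ aM 1%nat = aN 1%nat /\
     aM 2%nat = 1/6 * aM 1%nat * (1 + aM 1%nat) * (1 - 4 * aM 1%nat)) /\
  (aK 1%nat + aN 1%nat = -1 ->
     aM 1%nat = -1/2 /\ aM 2%nat = -1/8).
Proof.
  intros HmK HsK HhK HstK HmN HsN HhN HstN HmM HsM HhM HeK HeN HeM HKN HNK.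
  assert (AK := mean_exp K aK HmK HsK HhK HeK).
  assert (AN := mean_exp N aN HmN HsN HhN HeN).
  assert (AM := mean_exp M aM HmM HsM HhM HeM).
  set (r := aK 1%nat) in *. set (s := aK 2%nat) in *.
  set (p := aN 1%nat) in *. set (q := aN 2%nat) in *.
  set (al := aM 1%nat) in *. set (be := aM 2%nat) in *.
  destruct (stab_exp K N M p q r s al be HmK HhK HmN HhN HmM AK AN AM HKN) as [E1 E2].
  destruct (stab_exp N K M r s p q al be HmN HhN HmK HhK HmM AN AK AM HNK) as [F1 F2].
  destruct (stab_exp K K K r s r s r s HmK HhK HmK HhK HmK AK AK AK HstK) as [_ G2].
  destruct (stab_exp N N N p q p q p q HmN HhN HmN HhN HmN AN AN AN HstN) as [_ H2].
  assert (Hal : al = (p + r) / 2) by lra.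
  assert (Hs : s = r * (1 + r) * (1 - 4 * r) / 6) by nra.
  assert (Hq : q = p * (1 + p) * (1 - 4 * p) / 6) by nra.
  assert (Key : (p - r) * ((1 + p + r) * (1 + p + r)) = 0).
  { subst al. nra. }
  split; [|split].
  - apply Rmult_integral in Key. destruct Key as [Z|Z]; [left; lra|].
    apply Rmult_integral in Z. right; destruct Z; lra.
  - intro Heq. rewrite <- Heq in *. subst al. split; [lra|split; [lra|]].
    subst s q. nra.
  - intro Hsum. assert (al = -1/2) by lra. split; auto.
    subst s q. nra.
Qed.
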